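(* The function $g_{np}$ is $\mathbb{S}$-nearly periodic.
   Context: For an integer $x>0$ with binary expansion $x=\sum_{j\ge0}a_j2^j$, $a_j\in\{0,1\}$, let $i_x=\min\{j: a_j=1\}$. Define $g_{np}:\mathbb{Z}_{\ge0}\to\mathbb{R}$ by $g_{np}(0)=0$ and $g_{np}(x)=2^{-i_x}$ for $x>0$. A function $f:\mathbb{R}_{\ge0}\to\mathbb{R}_{\ge0}$ is sub-polynomial if for every $\alpha>0$, $\lim_{x\to\infty}x^\alpha f(x)=\infty$ and $\lim_{x\to\infty}x^{-\alpha}f(x)=0$. For a set $\mathcal{S}$ of functions, $g$ is $\mathcal{S}$-nearly periodic if (1) there is $\alpha>0$ such that for every $N>0$ there exist $x,y\in\mathbb{N}$, $x<y$, $y\ge N$ with $g(y)\le g(x)/y^\alpha$ (such $y$ is called an $\alpha$-period of $g$); and (2) for every $\alpha>0$ and every $h\in\mathcal{S}$ there is $N_1>0$ such that for all $\alpha$-periods $y\ge N_1$ and all $x<y$ with $g(y)y^\alpha\le g(x)$, $|g(x+y)-g(x)|\le \min\{g(x),g(x+y)\}h(y)$. $\mathbb{S}$ denotes the set of non-increasing sub-polynomial functions on $\mathbb{Z}_{\ge0}$. *)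

(* Defs.v *)
From Stdlib Require Import Reals Lra Lia PArith.
Open Scope R_scope.

(* Number of trailing zero bits of a positive binary number p, i.e. the
   least j with a_j = 1 in the binary expansion p = sum a_j 2^j. *)
Fixpoint pos_tz (p : positive) : nat :=
  match p with
  | xO q => S (pos_tz q)
  | _ => O
  end.

Definition i_of (x : nat) : nat := pos_tz (Pos.of_nat x).

Definition g_np (x : nat) : R :=
  match x with
  | O => 0
  | S _ => / (2 ^ i_of x)
  end.

(* y^alpha for natural y and real alpha (only used with y >= 1). *)
Definition npow (y : nat) (alpha : R) : R := Rpower (INR y) alpha.

Definition sub_polynomial (f : nat -> R) : Prop :=
  (forall n, 0 <= f n) /\
  (forall alpha, 0 < alpha ->
     (forall M : R, exists N : nat, forall n : nat, (N <= n)%nat ->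
        M < npow n alpha * f n)) /\
  (forall alpha, 0 < alpha ->
     (forall eps : R, 0 < eps -> exists N : nat, forall n : nat, (N <= n)%nat ->
        Rabs (npow n (- alpha) * f n) < eps)).

Definition non_increasing (f : nat -> R) : Prop :=
  forall m n : nat, (m <= n)%nat -> f n <= f m.

Definition SS (h : nat -> R) : Prop := non_increasing h /\ sub_polynomial h.

Definition alpha_period (g : nat -> R) (alpha : R) (y : nat) : Prop :=
  exists x : nat, (x < y)%nat /\ g y <= g x / npow y alpha.

Definition nearly_periodic (S : (nat -> R) -> Prop) (g : nat -> R) : Prop :=
  (exists alpha, 0 < alpha /\
     forall N : R, 0 < N -> exists x y : nat, (x < y)%nat /\ N <= INR y /\
        g y <= g x / npow y alpha) /\
  (forall alpha, 0 < alpha -> forall h, S h ->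
     exists N1 : R, 0 < N1 /\
       forall y : nat, alpha_period g alpha y -> N1 <= INR y ->
       forall x : nat, (x < y)%nat -> g y * npow y alpha <= g x ->
         Rabs (g (x + y)%nat - g x) <= Rmin (g x) (g (x + y)%nat) * h y).

(* Main.v *)
Require Import Defs.
From Stdlib Require Import Reals Lra Lia PArith ZArith.
Open Scope R_scope.

Lemma tz_add (p q : positive) : (pos_tz p < pos_tz q)%nat -> pos_tz (p + q) = pos_tz p.
Proof.
  revert q; induction p as [a IH|a IH|]; intros q H; destruct q as [b|b|]; simpl in *; try lia;
    try reflexivity; try (f_equal; apply IH; lia).
Qed.

Lemma i_of_add x y : (0 < x)%nat -> (0 < y)%nat -> (i_of x < i_of y)%nat -> i_of (x + y) = i_of x.
Proof.
  intros hx hy H; unfold i_of in *. rewrite Nat2Pos.inj_add by lia. now apply tz_add.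
Qed.

Lemma i_of_pow k : i_of (2 ^ k) = k.
Proof.
  unfold i_of. induction k as [|k IH]; [reflexivity|].
  rewrite Nat.pow_succ_r'. rewrite Nat2Pos.inj_mul.
  - simpl (Pos.of_nat 2). change (2 * Pos.of_nat (2 ^ k))%positive with (xO (Pos.of_nat (2^k))).
    simpl. now rewrite IH.
  - lia.
  - pose proof (Nat.pow_nonzero 2 k). lia.
Qed.

Lemma lin_pow n : (n < 2 ^ n)%nat.
Proof. induction n; simpl; lia. Qed.

Lemma g_pos x : (0 < x)%nat -> 0 < g_np x.
Proof. intros; destruct x; [lia|]. simpl g_np. apply Rinv_0_lt_compat, pow_lt; lra. Qed.

Lemma g_ge0 x : 0 <= g_np x.
Proof. destruct x; [simpl; lra|]. left; apply g_pos; lia. Qed.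

Lemma g_mono x y : (0 < x)%nat -> (0 < y)%nat -> (i_of y <= i_of x)%nat -> g_np x <= g_np y.
Proof.
  intros hx hy H. destruct x; [lia|]. destruct y; [lia|]. unfold g_np.
  apply Rinv_le_contravar; [apply pow_lt; lra|]. apply Rle_pow; lra || lia.
Qed.

Theorem proposition53 : nearly_periodic SS g_np.
Proof.
  split.
  - exists 1. split; [lra|]. intros N HN.
    destruct (archimed N) as [H1 _].
    set (n := Z.to_nat (up N)).
    assert (Hn : N <= INR n).
    { unfold n. rewrite INR_IZR_INZ, Z2Nat.id; [lra|].
      apply le_IZR. lra. }
    exists 1%nat, (2 ^ S n)%nat. pose proof (lin_pow (S n)).
    assert (H2 : (0 < 2 ^ S n)%nat) by lia.
    split; [lia|]. split.
    + apply Rle_trans with (INR n); [lra|]. apply le_INR; lia.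
    + unfold npow. rewrite Rpower_1 by (apply lt_0_INR; lia).
      destruct (2 ^ S n)%nat eqn:E; [lia|]. unfold g_np. rewrite <- E.
      rewrite i_of_pow, pow_INR. simpl (INR 2). simpl (i_of 1). simpl pow. replace (1+1) with 2 by ring. unfold Rdiv. rewrite Rinv_1, Rmult_1_l. lra.
  - intros alpha Ha h [_ [Hh _]]. exists 2. split; [lra|].
    intros y _ Hy x Hxy Hg.
    assert (Hy2 : (2 <= y)%nat).
    { destruct y as [|[|y]]; simpl in Hy; try lra. lia. }
    assert (Hp : 1 < npow y alpha).
    { unfold npow. rewrite <- (Rpower_O (INR y)) at 1 by (apply lt_0_INR; lia).
      apply Rpower_lt; [|lra]. apply (le_INR 2) in Hy2. simpl in Hy2. lra. }
    assert (gy := g_pos y ltac:(lia)).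
    destruct x as [|x'].
    + simpl in Hg. nra.
    + assert (Hi : (i_of (S x') < i_of y)%nat).
      { destruct (Nat.lt_ge_cases (i_of (S x')) (i_of y)) as [?|Hc]; [assumption|].
        apply g_mono in Hc; try lia. nra. }
      assert (E : g_np (S x' + y)%nat = g_np (S x')).
      { destruct y; [lia|]. replace (S x' + S y)%nat with (S (x' + S y)) by lia.
        unfold g_np. rewrite <- (Nat.add_succ_l x' (S y)).
        rewrite i_of_add by lia. reflexivity. }
      rewrite E, Rminus_diag, Rabs_R0, Rmin_left by lra.
      apply Rmult_le_pos; [apply g_ge0|apply Hh].
Qed.
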